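(* Let $p\geq2$ and $q\in\,]1,2]$ with $\frac1p+\frac1q=1$. Let $\mathcal{C}\subset\mathbb{R}^m$ be a centrally symmetric compact convex set with nonempty interior which is $(\alpha,p)$-uniformly convex for some $\alpha>0$, i.e. $\delta_{\|\cdot\|_{\mathcal{C}}}(\epsilon)\geq\alpha\epsilon^p$ for all $\epsilon\in[0,2]$. Let $\mathcal{X}\subset\mathbb{R}^m$ with $D=\sup_{x\in\mathcal{X}}\|x\|_{\mathcal{C}^\circ}<\infty$, and consider the class $\mathcal{F}_{\mathcal{C}}=\{x\in\mathcal{X}\mapsto\langle x,w\rangle:\|w\|_{\mathcal{C}}\leq1\}$. Then there exists $C>0$, depending only on $p$ and $\alpha$, such that for every $n\geq1$ and every distribution $\mu$ on $\mathcal{X}$, $R_n(\mathcal{F}_{\mathcal{C}})\leq\frac{C^{1/q}D}{n^{1/p}}$.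
   Context: $\|x\|_{\mathcal{C}}=\inf\{\lambda\geq0:x\in\lambda\mathcal{C}\}$ is the gauge (a norm), $\mathcal{C}^\circ=\{d:\langle x,d\rangle\leq1\ \forall x\in\mathcal{C}\}$ the polar and $\|\cdot\|_{\mathcal{C}^\circ}$ the dual norm of $\|\cdot\|_{\mathcal{C}}$. The modulus of convexity is $\delta_{\|\cdot\|_{\mathcal{C}}}(\epsilon)=\inf\{1-\|(x+y)/2\|_{\mathcal{C}}:\|x\|_{\mathcal{C}}=\|y\|_{\mathcal{C}}=1,\|x-y\|_{\mathcal{C}}\geq\epsilon\}$. For a class $\mathcal{F}$ of functions $\mathcal{X}\to\mathbb{R}$, the Rademacher constant is $R_n(\mathcal{F})=\mathbb{E}_{(\epsilon_i),(x_i)}\big[\sup_{f\in\mathcal{F}}\big|\frac1n\sum_{i=1}^nf(x_i)\epsilon_i\big|\big]$, where $x_1,\dots,x_n$ are i.i.d. from $\mu$ and $\epsilon_1,\dots,\epsilon_n$ are i.i.d. uniform on $\{-1,+1\}$, independent of the $x_i$. *)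

(* Defs.v *)
From HB Require Import structures.
From mathcomp Require Import all_boot all_order all_algebra.
From mathcomp Require Import all_classical all_reals all_analysis.
Set Implicit Arguments. Unset Strict Implicit. Unset Printing Implicit Defensive.
Import Order.TTheory GRing.Theory Num.Theory.
Import numFieldNormedType.Exports.
Local Open Scope classical_set_scope.
Local Open Scope ring_scope.

Section Defs.
Variables (R : realType) (m : nat).

Definition inner (x d : 'rV[R]_m) : R := \sum_(i < m) x ord0 i * d ord0 i.

Definition gauge (C : set 'rV[R]_m) (x : 'rV[R]_m) : R :=
  inf [set l : R | 0 <= l /\ exists2 c, C c & x = l *: c].

Definition polar (C : set 'rV[R]_m) : set 'rV[R]_m :=
  [set d | forall x, C x -> inner x d <= 1].

Definition dual_norm (C : set 'rV[R]_m) (x : 'rV[R]_m) : R := gauge (polar C) x.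

Definition modulus_convexity (C : set 'rV[R]_m) (eps : R) : R :=
  inf [set r : R | exists x y : 'rV[R]_m,
        [/\ gauge C x = 1, gauge C y = 1, eps <= gauge C (x - y)
           & r = 1 - gauge C ((2:R)^-1 *: (x + y))]].

Definition centrally_symmetric (C : set 'rV[R]_m) : Prop :=
  forall x, C x -> C (- x).

Definition unif_convex (C : set 'rV[R]_m) (alpha p : R) : Prop :=
  forall eps, 0 <= eps <= 2 -> alpha * powR eps p <= modulus_convexity C eps.

End Defs.

(* Borel sigma-algebras on R^m and on n-tuples of points (rows of an n x m matrix) *)
Definition Borel_rV (R : realType) (m : nat) :=
  g_sigma_algebraType (@open 'rV[R]_m).
Definition Borel_sample (R : realType) (n m : nat) :=
  g_sigma_algebraType (@open 'M[R]_(n, m)).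

(* nu is the law of (x_1,...,x_n) with x_i i.i.d. from mu, i.e. nu = mu^{(x) n}:
   nu(B_1 x ... x B_n) = prod_i mu(B_i) for all Borel B_i
   (this characterizes the product measure uniquely). *)
Definition iid_law (R : realType) (n m : nat)
    (mu : probability (Borel_rV R m) R) (nu : probability (Borel_sample R n m) R) : Prop :=
  forall B : 'I_n -> set (Borel_rV R m),
    (forall i, measurable (B i)) ->
    fine (nu [set M : Borel_sample R n m | forall i, B i (row i M)]) =
    \prod_(i < n) fine (mu (B i)).

(* the distribution mu lives on X: it gives full mass to a Borel subset of X *)
Definition supported_on (R : realType) (m : nat)
    (mu : probability (Borel_rV R m) R) (X : set 'rV[R]_m) : Prop :=
  exists2 A : set (Borel_rV R m), measurable A /\ A `<=` X & mu A = 1%E.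

Definition sgn (R : realType) (b : bool) : R := if b then 1 else -1.

(* Rademacher constant R_n(F_C) for the class F_C = {x |-> <x,w> : ||w||_C <= 1},
   x_1..x_n ~ nu (the rows), eps uniform on {-1,1}^n independent of the x_i *)
Definition rademacher_FC (R : realType) (n m : nat) (C : set 'rV[R]_m)
    (nu : probability (Borel_sample R n m) R) : \bar R :=
  (\int[nu]_(M in setT)
     ((((2:R) ^+ n)^-1)%:E *
      \sum_(s : {ffun 'I_n -> bool})
        ereal_sup [set (`| n%:R^-1 * \sum_(i < n) sgn R (s i) * inner (row i M) w |)%:E
                  | w in [set w : 'rV[R]_m | (gauge C w <= 1)%R]]))%E.

(* Main.v *)
Require Import Defs.
From HB Require Import structures.
From mathcomp Require Import all_boot all_order all_algebra.
From mathcomp Require Import all_classical all_reals all_analysis.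
From mathcomp Require Import ring lra.
Import Order.TTheory GRing.Theory Num.Theory.
Import numFieldNormedType.Exports.
Import HBNNSimple.
Local Open Scope classical_set_scope.
Local Open Scope ring_scope.
Section Meas.
Variable R : realType.

Lemma mx_entry_le a b (X : 'M[R]_(a, b)) k l : `|X k l| <= `|X|.
Proof.
have /mapP[kk Hk ->] : `|X k l| \in [seq `|X x.1 x.2| | x : 'I_a * 'I_b].
  by apply/mapP; exists (k, l) => //=; rewrite mem_enum.
by rewrite [leRHS]/Num.Def.normr /= mx_normrE; apply/bigmax_geP; right => /=; exists kk.
Qed.

Lemma row_norm_le a b (X : 'M[R]_(a, b)) i : `|row i X| <= `|X|.
Proof.
rewrite [leLHS]/Num.Def.normr /= mx_normrE.
apply: bigmax_le => //= -[k l] _.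
by rewrite /= mxE; exact: mx_entry_le.
Qed.

Lemma row_open n m i (U : set 'rV[R]_m) : open U ->
  open [set M : 'M[R]_(n, m) | U (row i M)].
Proof.
move=> oU; rewrite openE => M /= hM.
have := oU; rewrite openE => /(_ _ hM) /nbhs_ballP [e /= e0 be].
apply/nbhs_ballP; exists e => //= M' hM'.
apply: be; move: hM'; rewrite -!ball_normE /ball_ /= => h.
by apply: le_lt_trans h; rewrite -linearB; exact: row_norm_le.
Qed.

Lemma row_measurable n m i :
  measurable_fun (setT : set (Borel_sample R n m)) (fun M => row i M : Borel_rV R m).
Proof.
have h := @measurability _ _ (Borel_sample R n m) (Borel_rV R m) setT (fun M => row i M) (@open 'rV[R]_m).
apply: h => //.
move=> _ [U oU <-]; rewrite setTI; apply: sub_sigma_algebra.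
exact: row_open.
Qed.

Lemma E_measurable n m (A : set (Borel_rV R m)) : measurable A ->
  measurable [set M : Borel_sample R n m | forall i, A (row i M)].
Proof.
move=> mA.
have -> : [set M : Borel_sample R n m | forall i, A (row i M)] =
    \bigcap_(i in [set: 'I_n]) [set M : Borel_sample R n m | A (row i M)].
  by apply/seteqP; split => [M h i _|M h i]; [exact: h | exact: h].
apply: fin_bigcap_measurable; first exact: finite_finset.
move=> i _; have := row_measurable n m i measurableT _ mA; by rewrite setTI.
Qed.
End Meas.
Section Real.
Variable R : realType.
Implicit Types (x y z : R).

Lemma bern_concave (th y : R) : 0 < th <= 1 -> 0 <= y ->
  y `^ th <= 1 + th * (y - 1).
Proof.
move=> /andP[th0 th1] y0.
have [->|th1'] := eqVneq th 1; first by rewrite powRr1// mul1r addrC subrK.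
have thl1 : th < 1 by rewrite lt_neqAle th1' th1.
have P0 : 0 < th^-1 by rewrite invr_gt0.
have Q0 : 0 < (1 - th)^-1 by rewrite invr_gt0 subr_gt0.
have PQ : th^-1^-1 + (1 - th)^-1^-1 = 1 by rewrite !invrK addrC subrK.
have := @conjugate_powR R (y `^ th) 1 _ _ (powR_ge0 _ _) ler01 P0 Q0 PQ.
rewrite mulr1 -powRrM mulfV ?gt_eqF// powRr1// powR1 !invrK.
by move=> /le_trans; apply; rewrite [y * th]mulrC [1 * _]mul1r mulrBr mulr1 addrC -!addrA (addrC (- th)).
Qed.
End Real.
Section Exps.
Variables (R : realType) (p q alpha : R).
Hypotheses (p2 : 2 <= p) (q12 : 1 < q <= 2) (pq : p^-1 + q^-1 = 1) (a0 : 0 < alpha).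

Lemma p0 : 0 < p. Proof. exact: lt_le_trans p2. Qed.
Lemma q1 : 1 < q. Proof. by case/andP: q12. Qed.
Lemma q0 : 0 < q. Proof. exact: lt_trans q1. Qed.
Lemma q2 : q <= 2. Proof. by case/andP: q12. Qed.

Lemma bern2 (y : R) : 0 <= y ->
  y `^ q <= 1 + q * (y - 1) + (q - 1) * (y - 1) ^+ 2.
Proof.
move=> y0.
have qm : 0 < q - 1 <= 1 by rewrite subr_gt0 q1 /= lerBlDr -[1+1]/2 q2.
rewrite -(mulr_powRB1 y0 q0).
have h := @bern_concave R _ _ qm y0.
apply: le_trans (ler_wpM2l y0 h) _.
rewrite le_eqVlt; apply/orP; left; apply/eqP.
rewrite expr2; ring.
Qed.

Lemma bern_convex (z : R) : 0 <= z -> z <= z `^ q / q + p^-1.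
Proof.
move=> z0.
have pq' : q^-1 + p^-1 = 1 by rewrite addrC.
have := @conjugate_powR R z 1 q p z0 ler01 q0 p0 pq'.
by rewrite mulr1 powR1 mul1r.
Qed.

Definition c1 := (2 * alpha * p) `^ (- (q / p)) / q.

Lemma c1_ge0 : 0 <= c1.
Proof. by rewrite /c1 divr_ge0 ?powR_ge0 // ltW // q0. Qed.

Lemma young_t (t tau : R) : 0 <= t -> 0 <= tau ->
  t * tau <= 2 * alpha * t `^ p + c1 * tau `^ q.
Proof.
move=> t0 tau0.
set k := (2 * alpha * p) `^ p^-1.
have kp : 0 < 2 * alpha * p by rewrite !mulr_gt0 // p0.
have k0 : 0 < k by rewrite powR_gt0.
have := @conjugate_powR R (t * k) (tau / k) p q (mulr_ge0 t0 (ltW k0))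
  (divr_ge0 tau0 (ltW k0)) p0 q0 pq.
rewrite mulrACA divff ?gt_eqF // mulr1 => /le_trans; apply.
rewrite (powRM _ t0 (ltW k0)) /k -powRrM mulVf ?gt_eqF ?p0 // powRr1; last exact: ltW.
rewrite (powRM _ tau0); last by rewrite invr_ge0 ltW.
have -> : (((2 * alpha * p) `^ p^-1)^-1) `^ q = (2 * alpha * p) `^ (- (q / p)).
  by rewrite -powRN -powRrM; congr (_ `^ _); rewrite mulNr mulrC.
apply: lerD.
  rewrite le_eqVlt; apply/orP; left; apply/eqP.
  field; rewrite gt_eqF ?p0 //.
rewrite /c1 le_eqVlt; apply/orP; left; apply/eqP.
field; rewrite gt_eqF ?q0 //.
Qed.

Definition Kq := q * c1 + 2 * (q - 1) + 8.

Lemma Kq_gt0 : 0 < Kq.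
Proof.
rewrite /Kq; have := c1_ge0; have := q0 => h1 h2.
have h3 : 0 <= q - 1 by rewrite subr_ge0 ltW // q1.
have h4 : 0 <= q * c1 by rewrite mulr_ge0 // ltW.
lra.
Qed.

Lemma qpow (A B V U : R) : 0 <= A -> 0 <= B -> 0 <= V -> 0 <= U ->
  A <= V + U -> V <= A + U -> B <= V + U -> V <= B + U ->
  (0 < V -> A + B <= 2 * V + c1 * V * (U / V) `^ q) ->
  A `^ q + B `^ q <= 2 * V `^ q + Kq * U `^ q.
Proof.
move=> A0 B0 V0 U0 hA1 hA2 hB1 hB2 hsum.
have qq0 := q0; have qq1 := q1; have qq2 := q2.
have c10 := c1_ge0.
set c := c1 in hsum c10 *.
have Uq0 := powR_ge0 U q; have Vq0 := powR_ge0 V q.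
have Aq0 := powR_ge0 A q; have Bq0 := powR_ge0 B q.
case: (ltrP U V) => [UV|VU].
- have V0' : 0 < V := le_lt_trans U0 UV.
  have Vi0 : 0 < V^-1 by rewrite invr_gt0.
  set tau := U / V.
  have tau0 : 0 <= tau by rewrite divr_ge0.
  have tau1 : tau <= 1 by rewrite /tau ler_pdivrMr // mul1r ltW.
  set a := A / V - 1; set b := B / V - 1.
  have ea : a = (A - V) * V^-1 by rewrite /a mulrBl mulfV ?gt_eqF.
  have eb : b = (B - V) * V^-1 by rewrite /b mulrBl mulfV ?gt_eqF.
  have ha : - tau <= a <= tau.
    rewrite ea /tau -mulNr !ler_pM2r //; apply/andP; split; lra.
  have hb : - tau <= b <= tau.
    rewrite eb /tau -mulNr !ler_pM2r //; apply/andP; split; lra.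
  have hab : a + b <= c * tau `^ q.
    have -> : a + b = (A + B - 2 * V) * V^-1 by rewrite ea eb; field; rewrite gt_eqF.
    have -> : c * tau `^ q = (c * V * tau `^ q) * V^-1 by field; rewrite gt_eqF.
    rewrite ler_pM2r //; have := hsum V0'; lra.
  have ta2 : a ^+ 2 <= tau `^ q.
    apply: (@le_trans _ _ (tau ^+ 2)).
      case/andP: ha => h1 h2; nra.
    have [->|t0'] := eqVneq tau 0; first by rewrite expr0n /= powR_ge0.
    rewrite -powR_mulrn //; apply: ger_powR => //.
    by rewrite lt_neqAle eq_sym t0' tau0.
  have tb2 : b ^+ 2 <= tau `^ q.
    apply: (@le_trans _ _ (tau ^+ 2)).
      case/andP: hb => h1 h2; nra.
    have [->|t0'] := eqVneq tau 0; first by rewrite expr0n /= powR_ge0.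
    rewrite -powR_mulrn //; apply: ger_powR => //.
    by rewrite lt_neqAle eq_sym t0' tau0.
  have bA := @bern2 (A / V) (divr_ge0 A0 V0).
  have bB := @bern2 (B / V) (divr_ge0 B0 V0).
  rewrite -/a in bA; rewrite -/b in bB.
  have eA : A `^ q = V `^ q * (A / V) `^ q.
    by rewrite -powRM ?divr_ge0 // mulrC divfK ?gt_eqF.
  have eB : B `^ q = V `^ q * (B / V) `^ q.
    by rewrite -powRM ?divr_ge0 // mulrC divfK ?gt_eqF.
  have eU : U `^ q = V `^ q * tau `^ q.
    by rewrite -powRM ?divr_ge0 // /tau mulrC divfK ?gt_eqF.
  rewrite eA eB eU.
  have tq0 := powR_ge0 tau q.
  set X := (A / V) `^ q in bA eA *; set Y := (B / V) `^ q in bB eB *.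
  set T := tau `^ q in hab ta2 tb2 eU tq0 *.
  set W := V `^ q in eA eB eU Vq0 *.
  have h : X + Y <= 2 + Kq * T.
    rewrite /Kq -/c.
    have h1 : q * (a + b) <= q * (c * T) by rewrite ler_pM2l.
    have h2 : (q - 1) * a ^+ 2 <= (q - 1) * T by rewrite ler_wpM2l // subr_ge0 ltW.
    have h3 : (q - 1) * b ^+ 2 <= (q - 1) * T by rewrite ler_wpM2l // subr_ge0 ltW.
    have h4 : 0 <= 8 * T by rewrite mulr_ge0.
    lra.
  have -> : W * X + W * Y = W * (X + Y) by ring.
  have -> : 2 * W + Kq * (W * T) = W * (2 + Kq * T) by ring.
  nra.
- have hA : A <= 2 * U by lra.
  have hB : B <= 2 * U by lra.
  have h2q : (2 * U) `^ q <= 4 * U `^ q.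
    rewrite powRM //; apply: ler_wpM2r => //.
    have -> : (4 : R) = 2 `^ 2 by rewrite (@powR_mulrn _ 2 2) // expr2; lra.
    by apply: ler_powR => //; rewrite ler1n.
  have hAq : A `^ q <= (2 * U) `^ q by apply: ge0_ler_powR => //; rewrite ?ltW // nnegrE ?mulr_ge0.
  have hBq : B `^ q <= (2 * U) `^ q by apply: ge0_ler_powR => //; rewrite ?ltW // nnegrE ?mulr_ge0.
  rewrite /Kq.
  have h5 : 0 <= (q * c + 2 * (q - 1)) * U `^ q.
    apply: mulr_ge0 => //; apply: addr_ge0; apply: mulr_ge0 => //; first exact: ltW.
    by rewrite subr_ge0; exact: ltW.
  rewrite -/c; lra.
Qed.
Lemma jensen (I : finType) (y : I -> R) (M : R) : 0 < M ->
  (forall i, 0 <= y i) -> \sum_i y i `^ q <= #|I|%:R * M `^ q ->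
  \sum_i y i <= #|I|%:R * M.
Proof.
move=> M0 y0 hs.
have Mq0 : 0 < M `^ q := powR_gt0 _ M0.
have h i : y i <= M * (y i `^ q / M `^ q / q + p^-1).
  have := @bern_convex (y i / M) (divr_ge0 (y0 i) (ltW M0)).
  have -> : (y i / M) `^ q = y i `^ q / M `^ q.
    rewrite powRM ?invr_ge0 ?(ltW M0) // -powR_inv1 ?(ltW M0) // -powRrM mulN1r powRN //.
  move=> h.
  rewrite [X in X <= _](_ : _ = M * (y i / M)); last by field; rewrite gt_eqF.
  by rewrite ler_pM2l.
apply: le_trans (ler_sum _ (fun i _ => h i)) _.
rewrite -mulr_sumr big_split /= -!mulr_suml sumr_const.
rewrite mulrC ler_pM2r //.
have qq0 := q0.
have : (\sum_i y i `^ q) / M `^ q <= #|I|%:R.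
  by rewrite ler_pdivrMr.
move=> h1.
have h2 : (\sum_i y i `^ q) / M `^ q / q <= #|I|%:R / q.
  by rewrite ler_pM2r // invr_gt0.
apply: (le_trans (lerD h2 (lexx (p^-1 *+ #|I|)))).
have e (k : nat) : (k%:R / q + p^-1 *+ k <= k%:R :> R).
  rewrite -[p^-1 *+ k]mulr_natr.
  have -> : k%:R / q + p^-1 * k%:R = k%:R * (p^-1 + q^-1) :> R by ring.
  by rewrite pq mulr1.
exact: e.
Qed.

Section Geom.
Variable m : nat.
Local Notation V := 'rV[R]_m.
Implicit Types (x y z v u w c : V).

Lemma innerC x y : inner x y = inner y x.
Proof. by apply: eq_bigr => i _; rewrite mulrC. Qed.

Lemma innerDl x y z : inner (x + y) z = inner x z + inner y z.
Proof. by rewrite /inner -big_split; apply: eq_bigr => i _; rewrite mxE mulrDl. Qed.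

Lemma innerZl k x z : inner (k *: x) z = k * inner x z.
Proof. by rewrite /inner mulr_sumr; apply: eq_bigr => i _; rewrite mxE mulrA. Qed.

Lemma innerNl x z : inner (- x) z = - inner x z.
Proof. by rewrite -scaleN1r innerZl mulN1r. Qed.

Lemma innerBl x y z : inner (x - y) z = inner x z - inner y z.
Proof. by rewrite innerDl innerNl. Qed.

Lemma innerDr x y z : inner z (x + y) = inner z x + inner z y.
Proof. by rewrite !(innerC z) innerDl. Qed.

Lemma innerZr k x z : inner z (k *: x) = k * inner z x.
Proof. by rewrite !(innerC z) innerZl. Qed.

Lemma innerNr x z : inner z (- x) = - inner z x.
Proof. by rewrite !(innerC z) innerNl. Qed.

Lemma innerBr x y z : inner z (x - y) = inner z x - inner z y.
Proof. by rewrite innerDr innerNr. Qed.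

Lemma inner0l z : inner 0 z = 0.
Proof. by rewrite -(scale0r 0) innerZl mul0r. Qed.

Lemma inner0r z : inner z 0 = 0.
Proof. by rewrite innerC inner0l. Qed.

Lemma inner_suml (I : Type) (r : seq I) (P : pred I) (F : I -> V) w :
  inner (\sum_(i <- r | P i) F i) w = \sum_(i <- r | P i) inner (F i) w.
Proof.
elim/big_rec2: _ => [|i y1 y2 _ <-]; first by rewrite inner0l.
by rewrite innerDl.
Qed.

Variable C : set V.
Hypotheses (Ccpt : compact C) (Ccvx : convex_set C) (Csym : centrally_symmetric C)
  (Cint : interior C !=set0).

Lemma Cconv c1 c2 t : 0 <= t <= 1 -> C c1 -> C c2 -> C (t *: c1 + (1 - t) *: c2).
Proof.
move=> /andP[t0 t1] h1 h2.
have := Ccvx c1 c2 (Itv01 t0 t1).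
by rewrite !inE => /(_ h1 h2).
Qed.
Lemma entry_le_norm (v : V) j : `|v ord0 j| <= `|v|.
Proof.
have /mapP[k Hk ->] : `|v ord0 j| \in [seq `|v x.1 x.2| | x : 'I_1 * 'I_m].
  by apply/mapP; exists (ord0, j) => //=; rewrite mem_enum.
by rewrite [leRHS]/Num.Def.normr /= mx_normrE; apply/bigmax_geP; right => /=; exists k.
Qed.

Lemma Cbnd : exists2 Kc, 0 < Kc & forall c, C c -> forall j, `|c ord0 j| <= Kc.
Proof.
have [M [Mreal HM]] := compact_bounded Ccpt.
exists (`|M| + 1); first by rewrite ltr_wpDl.
move=> c Cc j; apply: le_trans (entry_le_norm _ _) _.
have := HM (`|M| + 1); apply.
  by rewrite (le_lt_trans (real_ler_norm Mreal)) // ltrDl.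
by [].
Qed.

Lemma half_eq (a b : V) : 2^-1 *: a + (1 - 2^-1) *: b = 2^-1 *: (a + b).
Proof. by rewrite scalerDr; congr (_ + _); congr (_ *: _); field. Qed.

Lemma half01 : 0 <= (2^-1 : R) <= 1.
Proof. apply/andP; split; first by rewrite invr_ge0. by rewrite invf_le1 // ler1n. Qed.

Lemma C0 : C 0.
Proof.
have [x0 /interior_subset Cx0] := Cint.
have := Cconv _ _ _ half01 Cx0 (Csym _ Cx0).
by rewrite half_eq addrN scaler0.
Qed.

Lemma absorb x : exists2 d, 0 < d & C (d *: x).
Proof.
have [x0 /nbhs_ballP [e /= e0 be]] := Cint.
have nx0 : 0 <= `|x| := normr_ge0 x.
set d := e / (2 * (`|x| + 1)).
have d0 : 0 < d by rewrite divr_gt0 // mulr_gt0 // ltr_wpDl.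
have hd : `|d *: x| < e.
  rewrite normrZ gtr0_norm // /d mulrAC ltr_pdivrMr ?mulr_gt0 ?ltr_wpDl //.
  rewrite ltr_pM2l //; lra.
have b1 : C (x0 + d *: x).
  apply: be; rewrite -ball_normE /ball_ /= opprD addrA addrN add0r normrN //.
have b2 : C (x0 - d *: x).
  apply: be; rewrite -ball_normE /ball_ /= opprB addrC subrK //.
exists d => //.
have := Cconv _ _ _ half01 b1 (Csym _ b2).
rewrite half_eq opprB [d *: x - x0]addrC addrACA addrN add0r -mulr2n -[d *: x *+ 2]scaler_nat scalerA.
by rewrite scalerA mulrA mulVf ?mul1r // pnatr_eq0.
Qed.

Lemma inner_bnd v : exists b, forall c, C c -> `|inner c v| <= b.
Proof.
have [Kc Kc0 hK] := Cbnd.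
exists (\sum_(j < m) Kc * `|v ord0 j|) => c Cc.
apply: le_trans (ler_norm_sum _ _ _) _.
apply: ler_sum => j _; rewrite normrM ler_wpM2r //; exact: hK.
Qed.

Definition phi v := sup [set inner c v | c in C].

Lemma phi_has_sup v : has_sup [set inner c v | c in C].
Proof.
split; first by exists (inner 0 v), 0 => //; exact: C0.
have [b hb] := inner_bnd v.
by exists b => _ [c Cc <-]; apply: le_trans (hb c Cc); exact: ler_norm.
Qed.

Lemma phi_ub v c : C c -> inner c v <= phi v.
Proof. by move=> Cc; apply: sup_upper_bound (phi_has_sup v) _ _; exists c. Qed.

Lemma phi_le v b : (forall c, C c -> inner c v <= b) -> phi v <= b.
Proof.
move=> h; apply: ge_sup; first by exists (inner 0 v), 0 => //; exact: C0.
by move=> _ [c Cc <-]; exact: h.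
Qed.

Lemma phi_ge0 v : 0 <= phi v.
Proof. by rewrite -(inner0l v); apply: phi_ub; exact: C0. Qed.

Lemma phi0 : phi 0 = 0.
Proof.
apply/eqP; rewrite eq_le phi_ge0 andbT.
by apply: phi_le => c _; rewrite inner0r.
Qed.

Lemma phiN v : phi (- v) = phi v.
Proof.
apply/eqP; rewrite eq_le; apply/andP; split; apply: phi_le => c Cc.
  by rewrite innerNr -innerNl; apply: phi_ub; exact: Csym.
have -> : inner c v = inner (- c) (- v) by rewrite innerNl innerNr opprK.
by apply: phi_ub; exact: Csym.
Qed.

Lemma phiD u v : phi (u + v) <= phi u + phi v.
Proof. by apply: phi_le => c Cc; rewrite innerDr lerD // ?phi_ub. Qed.

Lemma phi_adh v e : 0 < e -> exists2 c, C c & phi v - e < inner c v.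
Proof.
move=> e0; have [_ [c Cc <-] h] := sup_adherent e0 (phi_has_sup v).
by exists c.
Qed.

Definition gs w := [set l : R | 0 <= l /\ exists2 c, C c & w = l *: c].

Lemma gaugeE w : gauge C w = inf (gs w). Proof. by []. Qed.

Lemma gs_ne w : gs w !=set0.
Proof.
have [d d0 Cd] := absorb w.
exists d^-1; split; first by rewrite invr_ge0 ltW.
by exists (d *: w) => //; rewrite scalerA mulVf ?gt_eqF ?scale1r.
Qed.

Lemma gs_lb w : has_lbound (gs w).
Proof. by exists 0 => l [l0 _]. Qed.

Lemma gs_inf w : has_inf (gs w).
Proof. by split; [exact: gs_ne | exact: gs_lb]. Qed.

Lemma g_ge0 w : 0 <= gauge C w.
Proof. by rewrite gaugeE; apply: lb_le_inf; [exact: gs_ne | move=> l [l0 _]]. Qed.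

Lemma g_le w l : gs w l -> gauge C w <= l.
Proof. by move=> h; rewrite gaugeE; apply: ge_inf => //; exact: gs_lb. Qed.

Lemma g_lec l c : 0 <= l -> C c -> gauge C (l *: c) <= l.
Proof. by move=> l0 Cc; apply: g_le; split => //; exists c. Qed.

Lemma g_le1 c : C c -> gauge C c <= 1.
Proof. by move=> Cc; rewrite -[c]scale1r; apply: g_lec. Qed.

Lemma g0 : gauge C 0 = 0.
Proof.
apply/eqP; rewrite eq_le g_ge0 andbT.
by rewrite -(scale0r (0 : V)) g_lec //; exact: C0.
Qed.

Lemma g_adh w e : 0 < e ->
  exists l c, [/\ 0 <= l, C c, w = l *: c & l < gauge C w + e].
Proof.
move=> e0; have [l [l0 [c Cc ->]] h] := inf_adherent e0 (gs_inf w).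
by exists l, c.
Qed.

Lemma L1 w v : inner w v <= gauge C w * phi v.
Proof.
apply/ler_addgt0Pr => e e0.
have ph0 := phi_ge0 v.
set eps := e / (phi v + 1).
have eps0 : 0 < eps by rewrite divr_gt0 // ltr_wpDl.
have [l [c [l0 Cc -> hl]]] := g_adh w _ eps0.
rewrite innerZl.
have h1 : l * inner c v <= l * phi v by rewrite ler_wpM2l // phi_ub.
have h2 : l * phi v <= (gauge C (l *: c) + eps) * phi v by rewrite ler_wpM2r // ltW.
have h3 : eps * phi v <= e.
  rewrite /eps mulrAC ler_pdivrMr ?ltr_wpDl //; rewrite ler_pM2l //; lra.
rewrite mulrDl in h2; lra.
Qed.

Lemma gZle k w : 0 < k -> gauge C (k *: w) <= k * gauge C w.
Proof.
move=> k0; rewrite -ler_pdivrMl //; rewrite [X in _ <= X]gaugeE.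
apply: lb_le_inf; first exact: gs_ne.
move=> l [l0 [c Cc ->]]; rewrite ler_pdivrMl // scalerA.
by apply: g_lec => //; rewrite mulr_ge0 // ltW.
Qed.

Lemma gZ k w : 0 < k -> gauge C (k *: w) = k * gauge C w.
Proof.
move=> k0; apply/eqP; rewrite eq_le gZle //=.
have := gZle (k^-1) (k *: w); rewrite invr_gt0 => /(_ k0).
by rewrite scalerA mulVf ?gt_eqF // scale1r -ler_pdivrMl ?invr_gt0 // invrK.
Qed.

Lemma gNle w : gauge C (- w) <= gauge C w.
Proof.
rewrite [X in _ <= X]gaugeE; apply: lb_le_inf; first exact: gs_ne.
move=> l [l0 [c Cc ->]]; rewrite -scalerN; apply: g_lec => //; exact: Csym.
Qed.

Lemma gN w : gauge C (- w) = gauge C w.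
Proof.
by apply/eqP; rewrite eq_le gNle /=; rewrite -{1}[w]opprK gNle.
Qed.

Lemma g_tri x y : gauge C (x + y) <= gauge C x + gauge C y.
Proof.
apply/ler_addgt0Pr => e e0.
have e20 : 0 < e / 2 by rewrite divr_gt0.
have [l1 [c1 [l10 C1 -> h1]]] := g_adh x _ e20.
have [l2 [c2 [l20 C2 -> h2]]] := g_adh y _ e20.
apply: (@le_trans _ _ (l1 + l2)); last by lra.
have [l0|lpos] := eqVneq (l1 + l2) 0.
  have el1 : l1 = 0 by lra.
  have el2 : l2 = 0 by lra.
  by rewrite el1 el2 !scale0r addr0 g0 addr0.
have lp : 0 < l1 + l2 by rewrite lt_neqAle eq_sym lpos addr_ge0.
set t := l1 / (l1 + l2).
have t01 : 0 <= t <= 1.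
  apply/andP; split; first by rewrite divr_ge0 // addr_ge0.
  by rewrite ler_pdivrMr // mul1r lerDl.
have -> : l1 *: c1 + l2 *: c2 = (l1 + l2) *: (t *: c1 + (1 - t) *: c2).
  rewrite scalerDr !scalerA; congr (_ *: _ + _ *: _); rewrite /t; field; by rewrite lpos.
apply: g_lec; first exact: ltW.
exact: Cconv.
Qed.

Hypothesis unif : unif_convex C alpha p.

Lemma exists_unit : exists s, gauge C s = 1.
Proof.
apply: contrapT => nex.
have h := unif 1; rewrite powR1 mulr1 in h.
have h2 : (0 <= (1:R) <= 2) by apply/andP; split => //; rewrite ler1n.
move: (h h2); rewrite /modulus_convexity.
set S := [set r | _].
have -> : S = set0.
  apply/seteqP; split => // r [x [y [hx _ _ _]]]; apply: nex; by exists x.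
by rewrite inf0 => /(lt_le_trans a0); rewrite ltxx.
Qed.

Lemma unif_mid w1 w2 : gauge C w1 = 1 -> gauge C w2 = 1 ->
  gauge C (2^-1 *: (w1 + w2)) <= 1 - alpha * gauge C (w1 - w2) `^ p.
Proof.
move=> h1 h2.
set t := gauge C (w1 - w2).
have t02 : 0 <= t <= 2.
  apply/andP; split; first exact: g_ge0.
  apply: le_trans (g_tri _ _) _; rewrite gN h1 h2; lra.
have := unif t t02; rewrite /modulus_convexity => hm.
apply: (@le_trans _ _ (1 - inf [set r | exists x y : V,
        [/\ gauge C x = 1, gauge C y = 1, t <= gauge C (x - y)
           & r = 1 - gauge C (2^-1 *: (x + y))]])); last by lra.
have : inf [set r | exists x y : V,
        [/\ gauge C x = 1, gauge C y = 1, t <= gauge C (x - y)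
           & r = 1 - gauge C (2^-1 *: (x + y))]] <= 1 - gauge C (2^-1 *: (w1 + w2)).
  apply: ge_inf; last by exists w1, w2; split.
  exists 0 => _ [x [y [hx hy _ ->]]].
  rewrite gZ ?invr_gt0 // subr_ge0.
  have := g_tri x y; rewrite hx hy => hh.
  rewrite ler_pdivrMl //; lra.
lra.
Qed.

Lemma near_max a e : 0 < e -> exists2 w, gauge C w = 1 & phi a - e <= inner w a.
Proof.
move=> e0; have [s hs] := exists_unit.
have [c Cc hc] := phi_adh a _ e0.
case: (lerP (inner c a) 0) => hca.
  case: (lerP 0 (inner s a)) => hsa.
    by exists s => //; lra.
  exists (- s); first by rewrite gN.
  rewrite innerNl; lra.
set l := gauge C c.
have l1 : l <= 1 by exact: g_le1.
have hL := L1 c a; rewrite -/l in hL.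
have l0 : 0 < l.
  rewrite lt_neqAle g_ge0 andbT; apply/eqP => l0.
  by rewrite -l0 mul0r in hL; lra.
exists (l^-1 *: c); first by rewrite gZ ?invr_gt0 // mulVf ?gt_eqF.
rewrite innerZl; apply: (@le_trans _ _ (inner c a)); first lra.
by rewrite ler_pMl // invf_ge1.
Qed.

Lemma smooth_sum v u : 0 < phi v ->
  phi (v + u) + phi (v - u) <= 2 * phi v + c1 * phi v * (phi u / phi v) `^ q.
Proof.
move=> V0.
apply/ler_addgt0Pr => e e0.
have e20 : 0 < e / 2 by rewrite divr_gt0.
have [w1 hw1 h1] := near_max (v + u) _ e20.
have [w2 hw2 h2] := near_max (v - u) _ e20.
set t := gauge C (w1 - w2).
set mid := 2^-1 *: (w1 + w2).
have t0 : 0 <= t by exact: g_ge0.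
have hs : inner w1 (v + u) + inner w2 (v - u) = 2 * inner mid v + inner (w1 - w2) u.
  by rewrite /mid innerZl innerDl innerBl !innerDr ?innerNr; field.
have hm := unif_mid _ _ hw1 hw2; rewrite -/t -/mid in hm.
have hl1 := L1 mid v.
have hl2 := L1 (w1 - w2) u; rewrite -/t in hl2.
set Vv := phi v in V0 hl1 h1 h2 *.
set U := phi u in hl2 *.
set tau := U / Vv.
have tau0 : 0 <= tau by rewrite divr_ge0 ?phi_ge0 // ltW.
have eU : U = Vv * tau by rewrite /tau mulrC divfK ?gt_eqF.
have hy := young_t _ _ t0 tau0.
have hy' := ler_wpM2l (ltW V0) hy.
have hm' := ler_wpM2l (ltW V0) hm.
have hl1' : inner mid v <= (1 - alpha * t `^ p) * Vv.
  apply: le_trans hl1 _; apply: ler_pM => //; [exact: g_ge0 | exact: ltW].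
rewrite eU in hl2.
set T := t `^ p in hm hy hy' hm' hl1' *.
set Q := tau `^ q in hy hy' *.
have : t * (Vv * tau) = Vv * (t * tau) by ring.
move=> ee; rewrite ee in hl2.
rewrite mulrDr in hy'.
lra.
Qed.

Lemma smooth_q v u :
  phi (v + u) `^ q + phi (v - u) `^ q <= 2 * phi v `^ q + Kq * phi u `^ q.
Proof.
apply: qpow; rewrite ?phi_ge0 //.
- exact: phiD.
- by have := phiD (v + u) (- u); rewrite addrK phiN.
- by have := phiD v (- u); rewrite phiN.
- by have := phiD (v - u) u; rewrite subrK.
- exact: smooth_sum.
Qed.

Definition sgnv (b : bool) (y : V) : V := if b then y else - y.

Lemma sgnvE b y : sgn R b *: y = sgnv b y.
Proof. by case: b; rewrite /sgn /sgnv ?scale1r ?scaleN1r. Qed.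

Section TypeIneq.
Variables (n : nat) (x : 'I_n -> V) (D : R).
Hypothesis hx : forall i, phi (x i) <= D.

Definition Pk (k : nat) (s : {ffun 'I_n -> bool}) : V :=
  \sum_(i < n | (i < k)%N) sgnv (s i) (x i).

Lemma Pk0 s : Pk 0 s = 0.
Proof. by rewrite /Pk big_pred0. Qed.

Lemma PkS k (kn : (k < n)%N) s :
  Pk k.+1 s = Pk k s + sgnv (s (Ordinal kn)) (x (Ordinal kn)).
Proof.
rewrite /Pk (bigD1 (Ordinal kn)) //= addrC; congr (_ + _).
apply: eq_bigl => i; rewrite ltnS.
case: (ltngtP i k) => [h|h|h] /=.
- by apply/eqP => /(congr1 val) /= e; move: h; rewrite e ltnn.
- by [].
- by apply/negbF/eqP; apply: val_inj.
Qed.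

Definition flip (ko : 'I_n) (s : {ffun 'I_n -> bool}) : {ffun 'I_n -> bool} :=
  [ffun i => if i == ko then ~~ s i else s i].

Lemma flipK ko : involutive (flip ko).
Proof.
move=> s; apply/ffunP => i; rewrite !ffunE.
by case: (i == ko); rewrite ?negbK.
Qed.

Lemma Pk_flip k (kn : (k < n)%N) s : Pk k (flip (Ordinal kn) s) = Pk k s.
Proof.
apply: eq_bigr => i hi; rewrite ffunE.
case: eqP => // e; move: hi; rewrite e /= ltnn //.
Qed.

Lemma hD0 (i : 'I_n) : 0 <= D.
Proof. apply: le_trans (hx i); exact: phi_ge0. Qed.

Lemma type_step k (kn : (k < n)%N) :
  \sum_s phi (Pk k.+1 s) `^ q <=
  \sum_s phi (Pk k s) `^ q + #|{ffun 'I_n -> bool}|%:R * (Kq * D `^ q).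
Proof.
set ko := Ordinal kn.
set F := fun s : {ffun 'I_n -> bool} => phi (Pk k.+1 s) `^ q.
have eF : \sum_s F s = \sum_s F (flip ko s).
  by rewrite (reindex_inj (can_inj (flipK ko))).
have hD : phi (x ko) `^ q <= D `^ q.
  apply: ge0_ler_powR; [exact: ltW q0| | |exact: hx]; rewrite nnegrE.
    exact: phi_ge0.
  exact: hD0 ko.
have h2 : 2 * \sum_s F s <=
    \sum_s (2 * phi (Pk k s) `^ q + Kq * D `^ q).
  rewrite mulr2n mulrDl mul1r.
  rewrite {2}eF -big_split /=.
  apply: ler_sum => s _.
  rewrite /F !PkS Pk_flip ffunE eqxx.
  have hK : Kq * phi (x ko) `^ q <= Kq * D `^ q by rewrite ler_pM2l // Kq_gt0.
  case: (s ko) => /=; rewrite /sgnv.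
  + by apply: le_trans (smooth_q _ _) _; rewrite lerD2l.
  + by rewrite addrC; apply: le_trans (smooth_q _ _) _; rewrite lerD2l.
rewrite big_split /= -mulr_sumr sumr_const in h2.
rewrite -mulr_natl in h2.
have hN : 0 <= #|{ffun 'I_n -> bool}|%:R * (Kq * D `^ q).
  by rewrite mulr_ge0 // mulr_ge0 ?powR_ge0 // ltW // Kq_gt0.
rewrite -/F.
set N := #|{ffun 'I_n -> bool}|%:R in h2 hN *.
set A := \sum_s F s in h2 *.
set B := \sum_s phi (Pk k s) `^ q in h2 *.
have : N * (Kq * D `^ q) = #|predT : pred {ffun 'I_n -> bool}|%:R * (Kq * D `^ q) by [].
lra.
Qed.
Lemma type_ineq_k k : (k <= n)%N ->
  \sum_s phi (Pk k s) `^ q <= #|{ffun 'I_n -> bool}|%:R * (Kq * k%:R * D `^ q).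
Proof.
elim: k => [_|k IH kn].
  rewrite big1 ?mulr0 ?mul0r //= => s _.
  by rewrite Pk0 phi0 powR0 // gt_eqF // q0.
apply: le_trans (type_step k kn) _.
apply: le_trans (lerD (IH (ltnW kn)) (lexx _)) _.
rewrite -natr1 le_eqVlt; apply/orP; left; apply/eqP; ring.
Qed.

End TypeIneq.

Lemma phi_le_dual x : phi x <= dual_norm C x.
Proof.
rewrite /dual_norm /gauge; apply: lb_le_inf.
  have [b hb] := inner_bnd x.
  set l := `|b| + 1.
  have l0 : 0 < l by rewrite ltr_wpDl.
  exists l; split; first exact: ltW.
  exists (l^-1 *: x); last by rewrite scalerA mulfV ?gt_eqF ?scale1r.
  move=> c Cc; rewrite innerZr ler_pdivrMl // mulr1.
  apply: le_trans (ler_norm _) _; apply: le_trans (hb c Cc) _.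
  by apply: le_trans (ler_norm _) _; rewrite lerDl.
move=> l [l0 [d pd ->]]; apply: phi_le => c Cc.
by rewrite innerZr -[X in _ <= X]mulr1 ler_wpM2l // pd.
Qed.

Lemma abs_inner_le w v : gauge C w <= 1 -> `|inner w v| <= phi v.
Proof.
move=> g1; have ph := phi_ge0 v; have g0' := g_ge0 w.
rewrite ler_norml; apply/andP; split.
  rewrite lerNl -innerNr; apply: le_trans (L1 _ _) _; rewrite phiN.
  by rewrite -[X in _ <= X]mul1r ler_wpM2r.
by apply: le_trans (L1 _ _) _; rewrite -[X in _ <= X]mul1r ler_wpM2r.
Qed.

Lemma sum_bound n (x : 'I_n -> V) D : (0 < n)%N -> (forall i, phi (x i) <= D) ->
  \sum_(s : {ffun 'I_n -> bool}) phi (Pk n x n s) <=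
  #|{ffun 'I_n -> bool}|%:R * (Kq `^ q^-1 * n%:R `^ q^-1 * D).
Proof.
move=> n0 hx.
have D0 : 0 <= D by apply: (@hD0 n x D hx (Ordinal n0)).
set T := Kq `^ q^-1 * n%:R `^ q^-1 * D.
have T0 : 0 <= T by rewrite !mulr_ge0 ?powR_ge0.
have qi : q^-1 * q = 1 by rewrite mulVf // gt_eqF // q0.
have Tq : T `^ q = Kq * n%:R * D `^ q.
  rewrite /T (powRM _ (mulr_ge0 (powR_ge0 _ _) (powR_ge0 _ _)) D0).
  rewrite (powRM _ (powR_ge0 _ _) (powR_ge0 _ _)) -!powRrM qi.
  rewrite powRr1; last exact: ltW Kq_gt0.
  by rewrite powRr1.
have N0 : (0 < #|{ffun 'I_n -> bool}|%:R :> R).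
  by rewrite ltr0n card_ffun card_bool expn_gt0.
apply/ler_addgt0Pr => e e0.
set N := #|{ffun 'I_n -> bool}|%:R in N0 *.
have -> : N * T + e = N * (T + e / N) by field; rewrite gt_eqF.
have eN : 0 < e / N by rewrite divr_gt0.
have := @jensen _ (fun s => phi (Pk n x n s)) (T + e / N) (ltr_wpDl T0 eN) (fun _ => phi_ge0 _).
rewrite -/N; apply.
apply: le_trans (@type_ineq_k n x D hx n (leqnn n)) _; rewrite -/N ler_pM2l // -Tq.
apply: ge0_ler_powR; rewrite ?nnegrE; first exact: ltW q0.
- exact: T0.
- exact: addr_ge0 T0 (ltW eN).
- by rewrite lerDl ltW.
Qed.

Lemma pointwise n (M : 'M[R]_(n, m)) D : (0 < n)%N -> (forall i, phi (row i M) <= D) ->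
  ((((2:R) ^+ n)^-1)%:E * \sum_(s : {ffun 'I_n -> bool})
     ereal_sup [set (`| n%:R^-1 * \sum_(i < n) sgn R (s i) * inner (row i M) w |)%:E
               | w in [set w : 'rV[R]_m | (gauge C w <= 1)%R]] <=
   (powR Kq q^-1 * D / powR n%:R p^-1)%:E)%E.
Proof.
move=> n0 hx.
set x := fun i => row i M.
have h (s : {ffun 'I_n -> bool}) : (ereal_sup [set (`| n%:R^-1 * \sum_(i < n) sgn R (s i) * inner (row i M) w |)%:E
               | w in [set w : 'rV[R]_m | (gauge C w <= 1)%R]] <=
            (n%:R^-1 * phi (Pk n x n s))%:E)%E.
  apply: ge_ereal_sup => _ [w /= gw <-]; rewrite lee_fin.
  have -> : \sum_(i < n) sgn R (s i) * inner (row i M) w = inner w (Pk n x n s).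
    rewrite /Pk innerC inner_suml.
    rewrite [in RHS](eq_bigl xpredT); last by move=> i /=; rewrite ltn_ord.
    by apply: eq_bigr => i _; rewrite -sgnvE innerZl.
  rewrite normrM ger0_norm ?invr_ge0 // ler_wpM2l ?invr_ge0 //.
  exact: abs_inner_le.
apply: (@le_trans _ _ ((((2:R)^+n)^-1)%:E *
   \sum_(s : {ffun 'I_n -> bool}) (n%:R^-1 * phi (Pk n x n s))%:E)%E).
  apply: lee_wpmul2l; first by rewrite lee_fin invr_ge0 exprn_ge0.
  by apply: lee_sum => s _; exact: h.
rewrite sumEFin -EFinM lee_fin -mulr_sumr.
have hs := @sum_bound n x D n0 hx.
have hN : (#|{ffun 'I_n -> bool}|%:R : R) = 2 ^+ n.
  by rewrite card_ffun card_bool card_ord natrX.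
rewrite hN in hs.
have n0' : (0 < n%:R :> R) by rewrite ltr0n.
have hD : 0 <= D by apply: le_trans (hx (Ordinal n0)); exact: phi_ge0.
have e2 : (0 < (2:R) ^+ n) by rewrite exprn_gt0.
apply: (@le_trans _ _ ((2 ^+ n)^-1 * (n%:R^-1 * (2 ^+ n * (Kq `^ q^-1 * n%:R `^ q^-1 * D))))).
  by rewrite ler_pM2l ?invr_gt0 // ler_pM2l ?invr_gt0.
have np : n%:R `^ q^-1 * n%:R `^ p^-1 = n%:R :> R.
  rewrite -powRD; first by rewrite addrC pq powRr1 // ler0n.
  by rewrite pnatr_eq0 -lt0n n0 implybT.
have np0 : 0 < n%:R `^ p^-1 :> R by rewrite powR_gt0.
have na0 : 0 < n%:R `^ q^-1 :> R by rewrite powR_gt0.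
rewrite le_eqVlt; apply/orP; left; apply/eqP.
move: np na0 np0.
set a := n%:R `^ q^-1; set b := n%:R `^ p^-1; set K := Kq `^ q^-1.
move=> np na0 np0; rewrite -np.
field.
by rewrite !gt_eqF.
Qed.

Lemma geom_main (X : set V) (D : R) :
  has_ubound [set dual_norm C x | x in X] -> D = sup [set dual_norm C x | x in X] ->
  forall (n : nat) (mu : probability (Borel_rV R m) R)
         (nu : probability (Borel_sample R n m) R),
    (1 <= n)%N -> supported_on mu X -> iid_law mu nu ->
    (rademacher_FC C nu <= (powR Kq q^-1 * D / powR n%:R p^-1)%:E)%E.
Proof.
move=> hub hD n mu nu n1 [A [mA AX] muA] hiid.
set E := [set M : Borel_sample R n m | forall i, A (row i M)].
have mE : measurable E := @E_measurable R n m A mA.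
have nuE : nu E = 1%E.
  have h := hiid (fun _ => A) (fun _ => mA).
  rewrite big1 in h; last by move=> i _; rewrite muA.
  have fE : nu E \is a fin_num.
    rewrite ge0_fin_numE ?measure_ge0 //.
    exact: le_lt_trans (probability_le1 _ mE) (ltry _).
  by rewrite -(fineK fE) -/E h.
have nuC : nu (~` E) = 0%E by rewrite probability_setC // nuE subee.
have hbnd M : E M -> forall i, phi (row i M) <= D.
  move=> hM i; apply: le_trans (phi_le_dual _) _; rewrite hD.
  apply: (ub_le_sup hub); exists (row i M) => //; exact: AX.
have [a Aa] : A !=set0.
  apply/set0P/negP => /eqP A0; rewrite A0 measure0 in muA.
  by move: muA => /eqP; rewrite eqe eq_sym oner_eq0.
have D0 : 0 <= D.
  apply: le_trans (phi_ge0 a) _; apply: le_trans (phi_le_dual _) _; rewrite hD.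
  by apply: (ub_le_sup hub); exists a => //; exact: AX.
set b := powR Kq q^-1 * D / powR n%:R p^-1.
have b0 : 0 <= b by rewrite /b divr_ge0 ?mulr_ge0 ?powR_ge0.
rewrite /rademacher_FC ge0_integralTE; last first.
  move=> M; apply: mule_ge0; first by rewrite lee_fin invr_ge0 exprn_ge0.
  apply: sume_ge0 => s _.
  apply: le_trans (ereal_sup_ubound _); last first.
    by exists 0; [rewrite /= g0 | reflexivity].
  by rewrite lee_fin normr_ge0.
apply: ge_ereal_sup => _ [h /= hf <-].
rewrite -integralT_nnsfun.
apply: (@le_trans _ _ (\int[nu]_(x in setT) (cst b%:E) x)%E); last first.
  rewrite integral_cst //.
  apply: (@le_trans _ _ (b%:E * 1)%E); last by rewrite mule1.
  apply: lee_wpmul2l; first by rewrite lee_fin.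
  exact: probability_le1.
apply: ae_ge0_le_integral => //;
  try (by move=> x _; rewrite lee_fin; exact: fun_ge0);
  try (by apply/measurable_realfun.measurable_EFinP; exact: measurable_funPT);
  try (by move=> x _; rewrite lee_fin);
  try exact: measurable_cst.
exists (~` E); split => //; first exact: measurableC.
move=> M /= hM EM; apply: hM => _.
apply: le_trans (hf M) _.
exact: pointwise n1 (hbnd M EM).
Qed.

End Geom.

End Exps.

Theorem mainTheorem4 (R : realType) (p q alpha : R) :
  2 <= p -> 1 < q <= 2 -> p^-1 + q^-1 = 1 -> 0 < alpha ->
  exists2 K : R, 0 < K &
  forall (m : nat) (C : set 'rV[R]_m),
    compact C -> convex_set C -> centrally_symmetric C ->
    (interior C) !=set0 -> unif_convex C alpha p ->
  forall (X : set 'rV[R]_m) (D : R),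
    has_ubound [set dual_norm C x | x in X] ->
    D = sup [set dual_norm C x | x in X] ->
  forall (n : nat) (mu : probability (Borel_rV R m) R)
         (nu : probability (Borel_sample R n m) R),
    (1 <= n)%N -> supported_on mu X -> iid_law mu nu ->
    (rademacher_FC C nu <= (powR K q^-1 * D / powR n%:R p^-1)%:E)%E.
Proof.
move=> p2 q12 pq a0.
exists (Kq R p q alpha); first by apply: Kq_gt0.
move=> m C Ccpt Ccvx Csym Cint unif X D hub hD n mu nu n1 hsupp hiid.
eapply geom_main; eassumption.
Qed.
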